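(* Let $A(x)=\sin^2(2\pi x)$, $\hat m(A)=\frac{A(1/3)+A(2/3)}{2}$, $\eta(x)=\frac{x}{4}+\frac12$, $F(x)=A(\frac{x}{2})+A(\frac{x}{4}+\frac12)$, and $V_2(x)=\lim_{n\to\infty}\sum_{i=0}^{n-1}[F(\eta^i(x))-2\hat m(A)]$ for $x\in[0,1]$. For each $N$ let $$\varphi_N(x)=\sum_{i=0}^{N}\frac{2\pi}{4^i}\left(\sin(\pi\eta^i(x))\cos(\pi\eta^i(x))+\frac12\sin\left(\frac{\pi\eta^i(x)}{2}\right)\cos\left(\frac{\pi\eta^i(x)}{2}\right)\right).$$ Then $V_2'(x)=\varphi_N(x)+\xi_N(x)$ with $|\xi_N(x)|\le 3\pi\sum_{i=N}^{\infty}\frac{1}{4^i}=\frac{\pi}{4^{N-1}}$ for all $x\in[0,1]$.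
   Context: $\eta^i$ denotes the $i$-th iterate of $\eta$, with $\eta^0$ the identity. *)

(* Defs.v *)
From Stdlib Require Import Reals.
From Coquelicot Require Import Coquelicot.
Open Scope R_scope.

Definition A (x : R) : R := (sin (2 * PI * x)) ^ 2.
Definition mhat : R := (A (1/3) + A (2/3)) / 2.
Definition eta (x : R) : R := x / 4 + 1 / 2.
Definition eta_it (i : nat) (x : R) : R := Nat.iter i eta x.
Definition F (x : R) : R := A (x / 2) + A (x / 4 + 1 / 2).

Definition V2_partial (x : R) (n : nat) : R :=
  sum_n (fun i => F (eta_it i x) - 2 * mhat) n.
Definition V2 (x : R) : R := real (Lim_seq (V2_partial x)).

Definition phi (N : nat) (x : R) : R :=
  sum_n (fun i => 2 * PI / 4 ^ i *
     (sin (PI * eta_it i x) * cos (PI * eta_it i x)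
      + 1 / 2 * (sin (PI * eta_it i x / 2) * cos (PI * eta_it i x / 2)))) N.

(* Main.v *)
Require Import Defs.
From Stdlib Require Import Reals Lra Lia Ranalysis5.
From Coquelicot Require Import Coquelicot.
Open Scope R_scope.

Definition dF (y : R) : R :=
  2*PI*(sin(PI*y)*cos(PI*y) + 1/2*(sin(PI*y/2)*cos(PI*y/2))).

Lemma F_deriv y : is_derive F y (dF y).
Proof.
  unfold F, A, dF.
  auto_derive; auto.
  replace (2 * PI * (y * / 4 + 1 / 2)) with (PI * y / 2 + PI) by field.
  rewrite neg_sin, neg_cos.
  replace (2 * PI * (y * / 2)) with (PI * y) by field.
  field.
Qed.

Lemma dF_bound y : Rabs (dF y) <= 3 * PI.
Proof.
  unfold dF.
  pose proof PI_RGT_0.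
  destruct (SIN_bound (PI*y)), (COS_bound (PI*y)), (SIN_bound (PI*y/2)), (COS_bound (PI*y/2)).
  assert (Rabs (sin (PI*y) * cos (PI*y)) <= 1).
  { rewrite Rabs_mult. apply Rle_trans with (1*1); [|lra].
    apply Rmult_le_compat; try apply Rabs_pos; apply Rabs_le; lra. }
  assert (Rabs (sin (PI*y/2) * cos (PI*y/2)) <= 1).
  { rewrite Rabs_mult. apply Rle_trans with (1*1); [|lra].
    apply Rmult_le_compat; try apply Rabs_pos; apply Rabs_le; lra. }
  rewrite Rabs_mult, Rabs_right by lra.
  replace (3*PI) with (2*PI*(3/2)) by field.
  apply Rmult_le_compat_l; [lra|].
  eapply Rle_trans; [apply Rabs_triang|].
  rewrite (Rabs_mult (1/2)), (Rabs_right (1/2)) by lra. lra.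
Qed.

Lemma eta_it_eq i y : eta_it i y = (y - 2/3) / 4^i + 2/3.
Proof.
  induction i; unfold eta_it in *; simpl.
  - field.
  - rewrite IHi. unfold eta. field. apply pow_nonzero. lra.
Qed.

Lemma eta_it_deriv i y : is_derive (eta_it i) y (/ 4^i).
Proof.
  apply is_derive_ext with (f := fun y => (y - 2/3) / 4^i + 2/3).
  { intro t. symmetry. apply eta_it_eq. }
  auto_derive; auto. field. apply pow_nonzero. lra.
Qed.

Lemma F_fixed : F (2/3) = 2 * mhat.
Proof.
  unfold F, mhat.
  replace (2/3/2) with (1/3) by field.
  replace (2/3/4+1/2) with (2/3) by field.
  field.
Qed.

Lemma term_bound i y : Rabs (F (eta_it i y) - 2 * mhat) <= 3*PI*Rabs (y - 2/3) * (/4)^i.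
Proof.
  rewrite <- F_fixed.
  destruct (MVT_abs F dF (2/3) (eta_it i y)) as [c [Hc _]].
  { intros c _. apply is_derive_Reals, F_deriv. }
  rewrite Hc. rewrite eta_it_eq.
  replace ((y - 2 / 3) / 4 ^ i + 2 / 3 - 2 / 3) with ((y - 2/3) * (/4)^i)
    by (rewrite pow_inv; field; apply pow_nonzero; lra).
  rewrite Rabs_mult, (Rabs_right ((/4)^i)) by (apply Rle_ge, pow_le; lra).
  rewrite Rmult_assoc.
  apply Rmult_le_compat_r.
  - apply Rmult_le_pos; [apply Rabs_pos| apply pow_le; lra].
  - apply dF_bound.
Qed.

Lemma geom_ex : ex_series (fun n => (/4)^n).
Proof.
  eexists. apply is_series_geom. rewrite Rabs_right; lra.
Qed.

Lemma V2_ex y : ex_series (fun i => F (eta_it i y) - 2 * mhat).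
Proof.
  apply ex_series_Rabs.
  apply (@ex_series_le R_AbsRing R_CompleteNormedModule) with (b := fun i => 3*PI*Rabs (y - 2/3) * (/4)^i).
  { intro n. unfold norm; simpl. unfold abs; simpl. rewrite Rabs_Rabsolu. apply term_bound. }
  apply (@ex_series_scal_l R_AbsRing R_NormedModule (3*PI*Rabs (y - 2/3)) (fun n => (/4)^n)). apply geom_ex.
Qed.

Lemma V2_lim y : is_lim_seq (V2_partial y) (V2 y).
Proof.
  destruct (V2_ex y) as [l Hl].
  assert (H : is_lim_seq (V2_partial y) l) by exact Hl.
  unfold V2. rewrite (is_lim_seq_unique _ _ H). exact H.
Qed.

Definition tm (i : nat) (y : R) : R := 2 * PI / 4 ^ i *
     (sin (PI * eta_it i y) * cos (PI * eta_it i y)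
      + 1 / 2 * (sin (PI * eta_it i y / 2) * cos (PI * eta_it i y / 2))).

Lemma tm_eq i y : tm i y = dF (eta_it i y) * (/4)^i.
Proof. unfold tm, dF. rewrite pow_inv. field. apply pow_nonzero. lra. Qed.

Lemma tm_deriv i y : is_derive (fun y => F (eta_it i y) - 2*mhat) y (tm i y).
Proof.
  rewrite tm_eq.
  replace (dF (eta_it i y) * (/ 4) ^ i) with (minus (scal (/4^i) (dF (eta_it i y))) 0)
    by (rewrite pow_inv; unfold minus, scal, plus, opp; simpl; unfold mult; simpl; ring).
  apply (@is_derive_minus R_AbsRing R_NormedModule (fun y => F (eta_it i y)) (fun _ => 2*mhat)).
  - apply (@is_derive_comp R_AbsRing R_NormedModule F (eta_it i) y). apply F_deriv. apply eta_it_deriv.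
  - apply (@is_derive_const R_AbsRing R_NormedModule).
Qed.

Lemma tm_bound i y : Rabs (tm i y) <= 3*PI*(/4)^i.
Proof.
  rewrite tm_eq, Rabs_mult, (Rabs_right ((/4)^i)) by (apply Rle_ge, pow_le; lra).
  apply Rmult_le_compat_r. apply pow_le; lra. apply dF_bound.
Qed.

Lemma tm_ex y : ex_series (fun i => tm i y).
Proof.
  apply ex_series_Rabs.
  apply (@ex_series_le R_AbsRing R_CompleteNormedModule) with (b := fun i => 3*PI * (/4)^i).
  { intro n. unfold norm; simpl. unfold abs; simpl. rewrite Rabs_Rabsolu. apply tm_bound. }
  apply (@ex_series_scal_l R_AbsRing R_NormedModule (3*PI) (fun n => (/4)^n)). apply geom_ex.
Qed.

Definition cv (y : R) : {l : R | Un_cv (fun N => SP tm N y) l}.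
Proof.
  exists (Series (fun i => tm i y)).
  apply is_series_Reals. apply Series_correct. apply tm_ex.
Defined.

Definition r2 : posreal := mkposreal 2 ltac:(lra).

Lemma cvn : CVN_r tm r2.
Proof.
  exists (fun n => 3*PI*(/4)^n).
  exists (Series (fun n => Rabs (3*PI*(/4)^n))).
  split.
  - apply is_series_Reals. apply Series_correct.
    apply ex_series_ext with (a := fun n => 3*PI*(/4)^n).
    { intro n. rewrite Rabs_right; auto. apply Rle_ge, Rmult_le_pos.
      pose proof PI_RGT_0; lra. apply pow_le; lra. }
    apply (@ex_series_scal_l R_AbsRing R_NormedModule (3*PI) (fun n => (/4)^n)). apply geom_ex.
  - intros n y _. apply tm_bound.
Qed.

Lemma tm_cont n y : continuity_pt (tm n) y.
Proof.
  apply continuity_pt_filterlim.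
  apply (@ex_derive_continuous R_AbsRing R_NormedModule).
  apply ex_derive_ext with (f := fun y => dF (eta_it n y) * (/4)^n).
  { intro t. symmetry. apply tm_eq. }
  apply ex_derive_mult.
  - apply (@ex_derive_comp R_AbsRing R_NormedModule dF (eta_it n)).
    + unfold dF. auto_derive. auto.
    + eexists. apply eta_it_deriv.
  - apply ex_derive_const.
Qed.

Lemma partial_deriv n y :
  derivable_pt_lim (fun y => V2_partial y n) y (SP tm n y).
Proof.
  apply is_derive_Reals.
  apply is_derive_ext with (f := fun y => sum_f_R0 (fun i => F (eta_it i y) - 2*mhat) n).
  { intro t. unfold V2_partial. rewrite sum_n_Reals. reflexivity. }
  unfold SP. induction n; simpl.
  - apply tm_deriv.
  - apply (@is_derive_plus R_AbsRing R_NormedModule). apply IHn. apply tm_deriv.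
Qed.

Lemma geomS m : is_series (fun k => (/4)^(m+k)) ((/4)^m * (4/3)).
Proof.
  apply is_series_ext with (a := fun k => scal ((/4)^m) ((/4)^k)).
  { intro n. rewrite pow_add. reflexivity. }
  replace (4/3) with (/(1 - /4)) by field.
  apply (@is_series_scal_l R_AbsRing R_NormedModule).
  apply is_series_geom. rewrite Rabs_right; lra.
Qed.

Theorem mainTheorem11 :
  forall (N : nat) (x : R), 0 <= x <= 1 ->
    ex_finite_lim_seq (V2_partial x) /\
    ex_derive V2 x /\
    Rabs (Derive V2 x - phi N x) <= 3 * PI * Series (fun i => / 4 ^ (i + N)) /\
    3 * PI * Series (fun i => / 4 ^ (i + N)) = 4 * PI / 4 ^ N.
Proof.
  intros N x Hx.
  assert (Hb : Boule 0 r2 x).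
  { unfold Boule; simpl. rewrite Rminus_0_r, Rabs_right; lra. }
  assert (Hd : derivable_pt_lim V2 x (SFL tm cv x)).
  { apply (derivable_pt_lim_CVU (fun n y => V2_partial y n) (fun n => SP tm n) V2 (SFL tm cv) x 0 r2 Hb).
    - intros y n _. apply partial_deriv.
    - intros y _. apply is_lim_seq_Reals. apply V2_lim.
    - apply CVN_CVU. apply cvn.
    - intros y Hy. apply (SFL_continuity_pt tm cv r2 cvn). intros; apply tm_cont. exact Hy. }
  assert (HS : SFL tm cv x = Series (fun i => tm i x)) by reflexivity.
  assert (Hser : Series (fun i => / 4 ^ (i + N)) = (/4)^N * (4/3)).
  { apply is_series_unique. apply is_series_ext with (a := fun k => (/4)^(N+k)).
    { intro n. rewrite pow_inv, Nat.add_comm. reflexivity. }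
    apply geomS. }
  split; [|split; [|split]].
  - exists (V2 x). apply V2_lim.
  - eexists. apply is_derive_Reals. exact Hd.
  - rewrite (is_derive_unique V2 x _ (proj2 (is_derive_Reals _ _ _) Hd)), HS.
    assert (Hphi : phi N x = sum_f_R0 (fun i => tm i x) N).
    { unfold phi. rewrite sum_n_Reals. reflexivity. }
    rewrite Hphi, (Series_incr_n _ (S N)) by (lia || apply tm_ex).
    simpl Init.Nat.pred.
    replace (sum_f_R0 (fun i : nat => tm i x) N + Series (fun k : nat => tm (S N + k)%nat x) -
      sum_f_R0 (fun i : nat => tm i x) N) with (Series (fun k : nat => tm (S N + k)%nat x)) by ring.
    assert (Hexb : ex_series (fun k => 3*PI*(/4)^(S N + k))).
    { eexists. apply (@is_series_scal_l R_AbsRing R_NormedModule (3*PI)). apply geomS. }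
    eapply Rle_trans. apply Series_Rabs.
    { apply (@ex_series_le R_AbsRing R_CompleteNormedModule) with (b := fun k => 3*PI*(/4)^(S N + k)); auto.
      intro n. unfold norm; simpl. unfold abs; simpl. rewrite Rabs_Rabsolu. apply tm_bound. }
    eapply Rle_trans. apply Series_le with (b := fun k => 3*PI*(/4)^(S N + k)); auto.
    { intro n. split. apply Rabs_pos. apply tm_bound. }
    replace (Series (fun k => 3*PI*(/4)^(S N + k))) with (3*PI*((/4)^(S N)*(4/3)))
      by (symmetry; apply is_series_unique; exact (@is_series_scal_l R_AbsRing R_NormedModule (3*PI) _ _ (geomS (S N)))).
    rewrite Hser.
    simpl pow.
    pose proof PI_RGT_0.
    assert (0 < (/4)^N) by (apply pow_lt; lra).
    nra.
  - rewrite Hser, pow_inv. field. apply pow_nonzero. lra.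
Qed.
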